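(* Let $A$ and $\Lambda$ be as in the context. Then every eigenvalue $\lambda$ of the $(n+1)\times(n+1)$ matrix $\Lambda A^T A$ is real and satisfies $0 \le \lambda \le 1$.
   Context: Let $n \le m$ be nonnegative integers. Let $B_0,\dots,B_n$ be real-valued basis functions (e.g. B-spline basis functions, tensor-product B-spline basis functions, or T-spline blending functions) that are nonnegative and form a partition of unity, i.e. $B_i(\mathbf t)\ge 0$ and $\sum_{i=0}^n B_i(\mathbf t)=1$ for every parameter $\mathbf t$. Let $\mathbf t_0,\dots,\mathbf t_m$ be parameter values assigned to data points, and assume that for every $i$ there is some $j$ with $B_i(\mathbf t_j)\neq 0$. Let $A$ be the $(m+1)\times(n+1)$ matrix with entries $A_{ji}=B_i(\mathbf t_j)$ ($j=0,\dots,m$, $i=0,\dots,n$). Let $\Lambda=\mathrm{diag}\big(1/\sum_{j=0}^m B_0(\mathbf t_j),\dots,1/\sum_{j=0}^m B_n(\mathbf t_j)\big)$, a diagonal matrix with positive diagonal entries. *)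

(* Defs.v *)
From HB Require Import structures.
From mathcomp Require Import all_boot all_order all_algebra.
Set Implicit Arguments. Unset Strict Implicit. Unset Printing Implicit Defensive.
Import Order.TTheory GRing.Theory Num.Theory.
Local Open Scope ring_scope.

Definition collocation (C : numClosedFieldType) (T : Type) (n m : nat)
  (B : 'I_n.+1 -> T -> C) (t : 'I_m.+1 -> T) : 'M[C]_(m.+1, n.+1) :=
  \matrix_(j < m.+1, i < n.+1) B i (t j).

Definition Lambda_mx (C : numClosedFieldType) (T : Type) (n m : nat)
  (B : 'I_n.+1 -> T -> C) (t : 'I_m.+1 -> T) : 'M[C]_n.+1 :=
  diag_mx (\row_(i < n.+1) (\sum_(j < m.+1) B i (t j))^-1).

(* Main.v *)
Require Import Defs.
From HB Require Import structures.
From mathcomp Require Import all_boot all_order all_algebra.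
From mathcomp Require Import ring.
Import Order.TTheory GRing.Theory Num.Theory.
Local Open Scope ring_scope.

Lemma convex_sq (C : numClosedFieldType) (I : finType) (a w : I -> C) :
  (forall i, 0 <= a i) -> \sum_i a i = 1 ->
  (\sum_i a i * w i) * (\sum_i a i * w i)^* <= \sum_i a i * (w i * (w i)^*).
Proof.
move=> ha h1; set u := \sum_i a i * w i.
have hc : \sum_i a i * (w i)^* = u^*.
  rewrite /u rmorph_sum; apply: eq_bigr => i _.
  by rewrite rmorphM /= (conj_Creal (ger0_real (ha i))).
have hu : \sum_i a i * w i = u by [].
clearbody u.
have : 0 <= \sum_i a i * ((w i - u) * (w i - u)^*).
  by apply: sumr_ge0 => i _; apply: mulr_ge0 => //; apply: mul_conjC_ge0.
have -> : \sum_i a i * ((w i - u) * (w i - u)^*) =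
   \sum_i a i * (w i * (w i)^*) - (\sum_i a i * w i) * u^*
   - u * (\sum_i a i * (w i)^*) + (\sum_i a i) * (u * u^*).
  rewrite mulr_suml mulr_sumr mulr_suml -!sumrB -big_split /=.
  apply: eq_bigr => i _; rewrite rmorphB /=. ring.
by rewrite hc h1 hu mul1r subrK subr_ge0.
Qed.
Theorem lemma1 (C : numClosedFieldType) (T : Type) (n m : nat)
  (B : 'I_n.+1 -> T -> C) (t : 'I_m.+1 -> T)
  (hnm : (n <= m)%N)
  (hreal : forall i x, B i x \is Num.real)
  (hnonneg : forall i x, 0 <= B i x)
  (hpu : forall x, \sum_(i < n.+1) B i x = 1)
  (hsupp : forall i, exists j, B i (t j) != 0)
  (lambda : C) :
  eigenvalue (Lambda_mx B t *m (collocation B t)^T *m collocation B t) lambda ->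
  lambda \is Num.real /\ 0 <= lambda <= 1.
Proof.
move=> /eigenvalueP [v hv vn0].
pose s i := \sum_(j < m.+1) B i (t j).
have s_ge0 i : 0 <= s i by apply: sumr_ge0 => j _.
have s_neq0 i : s i != 0.
  apply/negP => /eqP h; have [j hj] := hsupp i.
  move: h; rewrite /s => /psumr_eq0P => /(_ (fun j _ => hnonneg i (t j)) j isT).
  by move/eqP; rewrite (negbTE hj).
pose w i := v 0 i * (s i)^-1.
pose u j := \sum_i B i (t j) * w i.
have hvL : v *m Lambda_mx B t = \row_i w i.
  by apply/rowP => i; rewrite /Lambda_mx mul_mx_diag !mxE.
have hvA : \row_i w i *m (collocation B t)^T = \row_j u j.
  apply/rowP => j; rewrite !mxE; apply: eq_bigr => i _.
  by rewrite !mxE mulrC.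
rewrite !mulmxA hvL hvA in hv.
have heq k : \sum_j u j * B k (t j) = lambda * (w k * s k).
  move/rowP: (hv) => /(_ k); rewrite !mxE /= => hk.
  rewrite /w mulfVK // -hk; apply: eq_bigr => j _; by rewrite /collocation !mxE.
have hcu j : (u j)^* = \sum_i B i (t j) * (w i)^*.
  rewrite /u rmorph_sum; apply: eq_bigr => i _.
  by rewrite rmorphM /= (conj_Creal (hreal _ _)).
pose P := \sum_j u j * (u j)^*.
pose Q := \sum_k s k * (w k * (w k)^*).
have hPQ : P = lambda * Q.
  rewrite /Q mulr_sumr.
  transitivity (\sum_k (\sum_j u j * B k (t j)) * (w k)^*); last first.
    by apply: eq_bigr => k _; rewrite heq; ring.
  under [RHS]eq_bigr do rewrite mulr_suml.
  rewrite exchange_big /P; apply: eq_bigr => j _.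
  by rewrite hcu mulr_sumr; apply: eq_bigr => i _; ring.
have P_ge0 : 0 <= P by apply: sumr_ge0 => j _; apply: mul_conjC_ge0.
have P_le : P <= Q.
  apply: (le_trans (y := \sum_j \sum_i B i (t j) * (w i * (w i)^*))).
    apply: ler_sum => j _; by apply: convex_sq => //; apply: hpu.
  rewrite exchange_big /Q le_eqVlt; apply/orP; left; apply/eqP; apply: eq_bigr => i _.
  by rewrite mulr_suml.
have Q_gt0 : 0 < Q.
  have [k hk] : exists k, v 0 k != 0.
    apply/existsP; apply: contraR vn0 => /existsPn h.
    by apply/eqP/rowP => k; rewrite mxE; apply/eqP; have := h k; rewrite negbK.
  rewrite lt_def; apply/andP; split; last first.
    by apply: sumr_ge0 => i _; apply: mulr_ge0 => //; apply: mul_conjC_ge0.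
  apply/negP => /eqP h.
  move: h; rewrite /Q => /psumr_eq0P => /(_ (fun i _ => mulr_ge0 (s_ge0 i) (mul_conjC_ge0 (w i))) k isT).
  move/eqP; rewrite mulf_eq0 mul_conjC_eq0 (negbTE (s_neq0 k)) /= /w mulf_eq0.
  by rewrite (negbTE hk) invr_eq0 (negbTE (s_neq0 k)).
have hl : lambda = P / Q by rewrite hPQ mulfK // gt_eqF.
have l_ge0 : 0 <= lambda by rewrite hl divr_ge0 // ltW.
split; first exact: ger0_real.
by rewrite l_ge0 /= hl ler_pdivrMr // mul1r.
Qed.
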